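(* Let $x\in\mathbb{R}_{\mathrm{alg}}^\times$ and $p\in\mathcal{P}_{KZ}$ with $p\notin\mathbb{R}_{\mathrm{alg}}$. Then $\deg(xp)=\deg(p)$.
   Context: $\mathbb{R}_{\mathrm{alg}}=\mathbb{R}\cap\overline{\mathbb{Q}}$. Semialgebraic subsets of $\mathbb{R}^n$ are finite unions of finite intersections of sets $\{f=0\}$, $\{g>0\}$ with $f,g\in\mathbb{R}_{\mathrm{alg}}[T_1,\dots,T_n]$; $\mathcal{SA}^n$ denotes those with nonempty interior. A period is a real number $\int_X (P/Q)(x)\,dx$ (absolutely convergent) with $X\in\mathcal{SA}^n$, $P,Q\in\mathbb{R}_{\mathrm{alg}}[T_1,\dots,T_n]$, $Q$ not identically zero on $X$; $\mathcal{P}_{KZ}$ is the set of periods (it is an $\mathbb{R}_{\mathrm{alg}}$-algebra). For a nonzero period $p$ there exists a positive integer $k$ and a compact $K\in\mathcal{SA}^k$ with $|p|=\mathrm{vol}_k(K)$; $\deg(p)$ is the smallest such $k$, and $\deg(0)=0$. *)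

(* Defs.v *)
From HB Require Import structures.
From mathcomp Require Import all_boot all_order all_algebra.
From mathcomp Require Import all_classical all_reals all_analysis.
Import Order.TTheory GRing.Theory Num.Theory.
Import numFieldNormedType.Exports.
Set Implicit Arguments.
Unset Strict Implicit.
Unset Printing Implicit Defensive.
Local Open Scope classical_set_scope.
Local Open Scope ring_scope.

Record mspace (R : realType) (n : nat) := MSpace {
  ms_disp : measure_display;
  ms_type : measurableType ms_disp;
  ms_meas : {measure set ms_type -> \bar R};
  ms_coord : ms_type -> 'rV[R]_n.+1 }.

Fixpoint lebspace (R : realType) (n : nat) : mspace R n :=
  match n with
  | 0 => @MSpace R 0 _ (measurableTypeR R) (@lebesgue_measure R) (fun x => \row_(i < 1) x)
  | k.+1 => let: MSpace d T m f := lebspace R k in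
      @MSpace R k.+1 _ (T * measurableTypeR R)%type (m \x (@lebesgue_measure R))%E
        (fun tx => \row_(i < k.+2) match unlift ord_max i with
                                 | Some j => f tx.1 0 j | None => tx.2 end)
  end.

Definition leb_vol (R : realType) (n : nat) (A : set 'rV[R]_n.+1) : \bar R :=
  let: MSpace _ _ m f := lebspace R n in m (f @^-1` A).

Definition leb_integrable (R : realType) (n : nat) (X : set 'rV[R]_n.+1)
    (g : 'rV[R]_n.+1 -> R) : Prop :=
  let: MSpace _ _ m f := lebspace R n in
  m.-integrable (f @^-1` X) (fun t => (g (f t))%:E).

Definition leb_integral (R : realType) (n : nat) (X : set 'rV[R]_n.+1)
    (g : 'rV[R]_n.+1 -> R) : \bar R :=
  let: MSpace _ _ m f := lebspace R n in
  (\int[m]_(t in f @^-1` X) (g (f t))%:E)%E.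

Definition is_alg (R : realType) (x : R) : Prop :=
  exists q : {poly rat}, q != 0 /\ root (map_poly ratr q) x.

Inductive alg_polyfun (R : realType) (n : nat) : ('rV[R]_n -> R) -> Prop :=
  | apf_const (c : R) : is_alg c -> alg_polyfun (fun _ => c)
  | apf_coord (i : 'I_n) : alg_polyfun (fun x => x 0 i)
  | apf_add f g : alg_polyfun f -> alg_polyfun g -> alg_polyfun (fun x => f x + g x)
  | apf_mul f g : alg_polyfun f -> alg_polyfun g -> alg_polyfun (fun x => f x * g x).

Inductive semialg (R : realType) (n : nat) : set 'rV[R]_n -> Prop :=
  | sa_eq f : alg_polyfun f -> semialg [set x | f x = 0]
  | sa_gt g : alg_polyfun g -> semialg [set x | 0 < g x]
  | sa_union A B : semialg A -> semialg B -> semialg (A `|` B)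
  | sa_inter A B : semialg A -> semialg B -> semialg (A `&` B).


Definition SA (R : realType) (n : nat) (A : set 'rV[R]_n) : Prop :=
  semialg A /\ (interior A) !=set0.

Definition is_period (R : realType) (p : R) : Prop :=
  exists (n : nat) (X : set 'rV[R]_n.+1) (P Q : 'rV[R]_n.+1 -> R),
    [/\ SA X, alg_polyfun P, alg_polyfun Q &
        (exists2 x, X x & Q x != 0)] /\
        leb_integrable X (fun x => P x / Q x) /\
        p%:E = leb_integral X (fun x => P x / Q x).

Definition vol_repr (R : realType) (p : R) (k : nat) : Prop :=
  match k with
  | 0 => False
  | j.+1 => exists K : set 'rV[R]_j.+1,
      [/\ SA K, compact K & (`|p|)%:E = leb_vol K]
  end.

Definition deg (R : realType) (p : R) : nat :=
  if p == 0 then 0%N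
  else xget 0%N [set k | vol_repr p k /\ (forall k', vol_repr p k' -> (k <= k')%N)].

(* Main.v *)
Require Import Defs.
From HB Require Import structures.
From mathcomp Require Import all_boot all_order all_algebra.
From mathcomp Require Import all_classical all_reals all_analysis.
Import Order.TTheory GRing.Theory Num.Theory.
Import numFieldNormedType.Exports.
Local Open Scope ring_scope.
Local Open Scope classical_set_scope.
Set Implicit Arguments.
Unset Strict Implicit.
Unset Printing Implicit Defensive.
From mathcomp Require Import ring.
Section S.
Context {R : realType}.

Lemma pre_ocitv (r a b : R) : 0 < r ->
  (fun s : R => r * s) @^-1` `]a, b] = `]a / r, b / r].
Proof.
move=> r0; apply/seteqP; split => s /=; rewrite !in_itv /=.
  by case/andP => h1 h2; rewrite ltr_pdivrMr // ler_pdivlMr // ![s * r]mulrC h1 h2.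
by rewrite ltr_pdivrMr // ler_pdivlMr // ![s * r]mulrC.
Qed.

Lemma wlength_scale (r a b : R) : 0 < r ->
  wlength idfun (`]a / r, b / r] : set (ocitv_type R)) =
  (r^-1%:E * wlength idfun (`]a, b] : set (ocitv_type R)))%E.
Proof.
move=> r0; have [ab|ba] := leP a b.
  rewrite !wlength_itv_bnd //; last by rewrite ler_pM2r ?invr_gt0.
  by rewrite -EFinM /= mulrBr ![r^-1 * _]mulrC.
rewrite !set_itv_ge ?wlength0 ?mule0 //= -leNgt ?ltW //.
by rewrite bnd_simp ltr_pM2r ?invr_gt0.
Qed.

End S.
Section S2.
Context {R : realType}.

Lemma leb_scale_le (r : R) (A : set R) : 0 < r ->
  (lebesgue_measure ((fun s : R => (r * s)%R) @^-1` A) <= r^-1%:E * lebesgue_measure A)%E.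
Proof.
move=> r0.
rewrite /lebesgue_measure /lebesgue_stieltjes_measure /measure_extension /=.
rewrite /mu_ext -ereal_inf_pZl ?invr_gt0 //.
apply: ereal_inf_le_tmp => _ [_ [F [mF AF] <-] <-].
exists (fun k => (fun s : R => (r * s)%R) @^-1` F k).
  split.
    move=> i; have [[a b] _ /= Fi] := mF i.
    rewrite -Fi pre_ocitv //; by exists (a / r, b / r).
  by move=> s /AF [k _ Fk]; exists k.
rewrite -nneseriesZl; last by move=> i _; exact: wlength_ge0.
apply: eq_eseriesr => i _.
have [[a b] _ /= Fi] := mF i.
by rewrite -Fi pre_ocitv // wlength_scale.
Qed.

End S2.
Section S3.
Context {R : realType}.
Local Open Scope ereal_scope.

Lemma leb_scale (r : R) (A : set R) : (0 < r)%R ->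
  lebesgue_measure ((fun s : R => (r * s)%R) @^-1` A) = r^-1%:E * lebesgue_measure A.
Proof.
move=> r0; apply/le_anti; rewrite leb_scale_le //=.
have r0' : (0 < r^-1)%R by rewrite invr_gt0.
have := @leb_scale_le _ r^-1 ((fun s : R => (r * s)%R) @^-1` A) r0'.
rewrite invrK.
have -> : (fun s : R => (r^-1 * s)%R) @^-1` ((fun s : R => (r * s)%R) @^-1` A) = A.
  by apply/funext => s /=; rewrite mulVKf // gt_eqF.
move=> h; apply: (le_trans (lee_wpmul2l _ h)); first by rewrite lee_fin invr_ge0 ltW.
by rewrite muleA -EFinM mulVf ?gt_eqF // mul1e.
Qed.

End S3.
Section S4.
Context {R : realType}.
Local Open Scope ereal_scope.
Import HBNNSimple.

Lemma integral_scale d (T : measurableType d) (m : {measure set T -> \bar R})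
  (h : T -> \bar R) (r : R) : (0 < r)%R -> (forall x, 0 <= h x) ->
  \int[m]_x (r%:E * h x) = r%:E * \int[m]_x h x.
Proof.
move=> r0 h0.
rewrite !ge0_integralTE //; last by move=> x; rewrite mule_ge0 // lee_fin ltW.
rewrite /= -ereal_sup_pZl //; congr ereal_sup; apply/seteqP; split.
- move=> _ [g /= gh <-].
  have ri : (0 <= r^-1)%R by rewrite invr_ge0 ltW.
  exists (sintegral m (scale_nnsfun g ri)).
    exists (scale_nnsfun g ri) => //= x.
    have := gh x => /(lee_wpmul2l (ri : 0 <= r^-1%:E)).
    by rewrite muleA -!EFinM mulVf ?gt_eqF // mul1e.
  have -> : sintegral m (scale_nnsfun g ri) = sintegral m (cst r^-1 \* g)%R by [].
  by rewrite sintegralrM muleA -EFinM divff ?gt_eqF // mul1e.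
- move=> _ [_ [g /= gh <-] <-].
  exists (scale_nnsfun g (ltW r0)).
    move=> x /=; rewrite EFinM; apply: lee_wpmul2l; [by rewrite lee_fin ltW|exact: gh].
  have -> : sintegral m (scale_nnsfun g (ltW r0)) = sintegral m (cst r \* g)%R by [].
  by rewrite sintegralrM.
Qed.
End S4.
Section S5.
Context {R : realType}.

Definition sc (n : nat) (r : R) (y : 'rV[R]_n.+1) : 'rV[R]_n.+1 :=
  \row_i (if i == ord_max then r * y 0 i else y 0 i).

Lemma leb_vol_sc (n : nat) (r : R) (K : set 'rV[R]_n.+1) : 0 < r ->
  leb_vol (sc r @^-1` K) = (r^-1%:E * leb_vol K)%E.
Proof.
case: n K => [|n] K r0.
  rewrite /leb_vol /=.
  have -> : (fun x : R => \row_(i < 1) x) @^-1` (sc r @^-1` K) =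
     (fun s : R => (r * s)%R) @^-1` ((fun x : R => \row_(i < 1) x) @^-1` K).
    apply/funext => s /=; congr K; apply/rowP => i; rewrite !mxE (ord1 i) /=.
    done.
  exact: leb_scale.
rewrite /leb_vol /=.
case: (lebspace R n) => d T m f /=.
set G := (fun tx : T * _ => _).
have HG : forall t s, sc r (G (t, s)) = G (t, r * s).
  move=> t s; apply/rowP => i; rewrite !mxE.
  case: (unliftP ord_max i) => [j ->|->].
    by rewrite eq_sym (negbTE (neq_lift _ _)).
  by rewrite eqxx.
have Hx : forall t, xsection (G @^-1` (sc r @^-1` K)) t =
    (fun s : R => (r * s)%R) @^-1` (xsection (G @^-1` K) t).
  move=> t; apply/funext => s /=; rewrite /xsection /= !in_setE /=.
  by rewrite HG.
rewrite /product_measure1 /=.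
transitivity (\int[m]_x (r^-1%:E * lebesgue_measure (xsection (G @^-1` K) x)))%E.
  by apply: eq_integral => t _; rewrite /= Hx leb_scale.
rewrite integral_scale // ?invr_gt0 //.
Qed.
End S5.
Section S6.
Context {R : realType}.

Lemma sc_comp n (r s : R) (y : 'rV[R]_n.+1) : sc r (sc s y) = sc (r * s) y.
Proof. by apply/rowP => i; rewrite !mxE; case: (i == ord_max); rewrite ?mulrA. Qed.

Lemma sc1 n (y : 'rV[R]_n.+1) : sc 1 y = y.
Proof. by apply/rowP => i; rewrite !mxE; case: ifP => _; rewrite ?mul1r. Qed.

Lemma sc_cont n (r : R) : continuous (@sc R n r).
Proof.
move=> u A /nbhs_ballP[e /= e0 eA].
have r1 : 0 < 1 + `|r| by rewrite ltr_pwDl.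
apply/nbhs_ballP; exists (e / (1 + `|r|)) => /=; first by rewrite divr_gt0.
move=> v [_ uv]; apply: eA; split => // i j.
have := uv i j; rewrite /ball /= !mxE (ord1 i) => h.
rewrite ltr_pdivlMr // in h.
case: ifP => _.
  rewrite -mulrBr normrM; apply: le_lt_trans h.
  by rewrite mulrC ler_wpM2l // lerDr.
apply: le_lt_trans h; rewrite ler_peMr //  lerDl //.
Qed.

End S6.
Section S7.
Context {R : realType}.

Lemma sc_pre_compact n (r : R) (K : set 'rV[R]_n.+1) : r != 0 -> compact K ->
  compact (sc r @^-1` K).
Proof.
move=> r0 cK.
have -> : sc r @^-1` K = sc r^-1 @` K.
  apply/seteqP; split => y /=.
    by move=> Ky; exists (sc r y) => //; rewrite sc_comp mulVf // sc1.
  by move=> [z Kz <-]; rewrite sc_comp mulfV // sc1.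
apply: continuous_compact => //; exact: continuous_subspaceT (@sc_cont R n _).
Qed.

Lemma sc_pre_interior n (r : R) (K : set 'rV[R]_n.+1) : r != 0 ->
  interior K !=set0 -> interior (sc r @^-1` K) !=set0.
Proof.
move=> r0 [y Ky]; exists (sc r^-1 y).
have h := @sc_cont R n r (sc r^-1 y).
move: h; rewrite /continuous_at sc_comp mulfV // sc1 => /(_ K Ky).
done.
Qed.

End S7.
Section S8.
Context {R : realType}.

Lemma alg_rat (q : rat) : is_alg (ratr q : R).
Proof.
exists ('X - q%:P); split; first by rewrite polyXsubC_eq0.
by rewrite map_polyXsubC root_XsubC.
Qed.

Lemma alg0 : is_alg (0 : R).
Proof. by have := alg_rat 0; rewrite rmorph0. Qed.

Lemma alg1 : is_alg (1 : R).
Proof. by have := alg_rat 1; rewrite rmorph1. Qed.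

Lemma algN (x : R) : is_alg x -> is_alg (- x).
Proof.
move=> [q [q0 rq]]; exists (q \Po - 'X); split.
  by rewrite comp_poly2_eq0 // size_opp size_polyX.
move: rq; rewrite map_comp_poly rmorphN /= map_polyX !rootE horner_comp.
by rewrite hornerN hornerX opprK.
Qed.

Lemma alg_abs (x : R) : is_alg x -> is_alg `|x|.
Proof.
move=> ax; have [x0|x0] := leP 0 x; first by rewrite ger0_norm.
by rewrite ltr0_norm //; exact: algN.
Qed.

Definition Hsc n (r : R) := forall f : 'rV[R]_n.+1 -> R, alg_polyfun f ->
  exists h k, [/\ alg_polyfun h, alg_polyfun (fun _ : 'rV[R]_n.+1 => k), 0 < k &
    forall y, h y = k * f (sc r y)].

Lemma Hsc_gen n (r : R) : (exists h k, [/\ alg_polyfun h,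
     alg_polyfun (fun _ : 'rV[R]_n.+1 => k), 0 < k &
     forall y : 'rV[R]_n.+1, h y = k * (r * y 0 ord_max)]) -> Hsc n r.
Proof.
move=> hmax f; elim => {f}.
- move=> c ac; exists (fun _ => c), 1; split => //.
  + exact: apf_const.
  + exact: apf_const alg1.
  + by move=> y; rewrite mul1r.
- move=> i; case: (eqVneq i ord_max) => [->|ne].
    have [h [k [ah ak k0 E]]] := hmax.
    by exists h, k; split => // y; rewrite E mxE eqxx.
  exists (fun x : 'rV[R]_n.+1 => x 0 i), 1; split => //.
  + exact: apf_coord.
  + exact: apf_const alg1.
  + by move=> y; rewrite mul1r mxE (negbTE ne).
- move=> f g _ [h1 [k1 [ah1 ak1 k10 E1]]] _ [h2 [k2 [ah2 ak2 k20 E2]]].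
  exists (fun y => k2 * h1 y + k1 * h2 y), (k1 * k2); split.
  + by apply: apf_add; apply: apf_mul.
  + exact: apf_mul.
  + exact: mulr_gt0.
  + by move=> y; rewrite E1 E2; ring.
- move=> f g _ [h1 [k1 [ah1 ak1 k10 E1]]] _ [h2 [k2 [ah2 ak2 k20 E2]]].
  exists (fun y => h1 y * h2 y), (k1 * k2); split.
  + exact: apf_mul.
  + exact: apf_mul.
  + exact: mulr_gt0.
  + by move=> y; rewrite E1 E2; ring.
Qed.

Lemma semialg_sc n (r : R) (K : set 'rV[R]_n.+1) : Hsc n r -> semialg K ->
  semialg (sc r @^-1` K).
Proof.
move=> H; elim => {K}.
- move=> f af; have [h [k [ah ak k0 E]]] := H f af.
  have -> : sc r @^-1` [set x | f x = 0] = [set x | h x = 0].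
    apply/seteqP; split => y /=; rewrite E; first by move->; rewrite mulr0.
    by move/eqP; rewrite mulf_eq0 gt_eqF //= => /eqP.
  exact: sa_eq.
- move=> f af; have [h [k [ah ak k0 E]]] := H f af.
  have -> : sc r @^-1` [set x | 0 < f x] = [set x | 0 < h x].
    by apply/seteqP; split => y /=; rewrite E pmulr_rgt0.
  exact: sa_gt.
- by move=> A B _ hA _ hB; exact: sa_union.
- by move=> A B _ hA _ hB; exact: sa_inter.
Qed.

End S8.
Section S9.
Context {R : realType}.

Lemma Hsc_c n (c : R) : is_alg c -> Hsc n c.
Proof.
move=> ac; apply: Hsc_gen.
exists (fun y : 'rV[R]_n.+1 => c * y 0 ord_max), 1; split => //.
- by apply: apf_mul; [exact: apf_const|exact: apf_coord].
- exact: apf_const alg1.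
- by move=> y; rewrite mul1r.
Qed.

Lemma Hsc_invc n (c : R) : is_alg c -> 0 < c -> Hsc n c^-1.
Proof.
move=> ac c0; apply: Hsc_gen.
exists (fun y : 'rV[R]_n.+1 => y 0 ord_max), c; split => //.
- exact: apf_coord.
- exact: apf_const.
- by move=> y; rewrite mulrA mulfV ?gt_eqF // mul1r.
Qed.

Lemma vol_repr_abs (a b : R) k : `|a| = `|b| -> vol_repr a k -> vol_repr b k.
Proof. by case: k => [//|j] /= ab [K [sK cK E]]; exists K; split => //; rewrite -ab. Qed.

Lemma vol_scale (a c : R) k : 0 < c -> (forall n, Hsc n c^-1) ->
  vol_repr a k -> vol_repr (c * a) k.
Proof.
case: k => [//|j] /= c0 H [K [[saK intK] cK E]].
exists (sc c^-1 @^-1` K); split.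
- split; first exact: semialg_sc.
  by apply: sc_pre_interior => //; rewrite invr_neq0 // gt_eqF.
- by apply: sc_pre_compact => //; rewrite invr_neq0 // gt_eqF.
- by rewrite leb_vol_sc ?invr_gt0 // invrK -E normrM gtr0_norm // EFinM.
Qed.

End S9.

Theorem mainTheorem7 (R : realType) (x p : R) :
  is_alg x -> x != 0 -> is_period p -> ~ is_alg p ->
  deg (x * p) = deg p.
Proof.
move=> ax x0 _ np.
have p0 : p != 0 by apply/negP => /eqP p0; apply: np; rewrite p0; exact: alg0.
have xp0 : x * p != 0 by rewrite mulf_neq0.
set c := `|x|.
have c0 : 0 < c by rewrite normr_gt0.
have ac : is_alg c by exact: alg_abs.
have ci0 : 0 < c^-1 by rewrite invr_gt0.
have E : forall k, vol_repr (x * p) k <-> vol_repr p k.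
  move=> k; split => h.
    have H : forall n, Hsc n c^-1^-1 by move=> n; rewrite invrK; exact: Hsc_c.
    have := @vol_scale _ _ c^-1 k ci0 H h.
    apply: vol_repr_abs.
    by rewrite normrM normrM normfV normr_id mulrA mulVf ?gt_eqF // mul1r.
  have := @vol_scale _ _ c k c0 (fun n => @Hsc_invc _ n c ac c0) h.
  by apply: vol_repr_abs; rewrite !normrM normr_id.
rewrite /deg (negbTE p0) (negbTE xp0).
congr xget; apply/funext => k; apply/propext; split => -[h1 h2]; split.
- exact/E.
- by move=> k' /E; exact: h2.
- exact/E.
- by move=> k' /E; exact: h2.
Qed.
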